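(* Let $p>1$ be an integer and let $u^{(p)}$ be the fixed point of the substitution $\varphi_p(L)=L^pS$, $\varphi_p(S)=M$, $\varphi_p(M)=L^{p-1}S$. Then (i) each occurrence of $S$ in $u^{(p)}$ is preceded by $L$ and followed either by $L$ or by $M$; (ii) each occurrence of $M$ in $u^{(p)}$ is preceded by $S$ and followed by $L$.
   Context: $u^{(p)}=\lim_{n\to\infty}\varphi_p^n(L)$ is the unique infinite word over $\{L,S,M\}$ with $\varphi_p(u^{(p)})=u^{(p)}$. *)

(* Defs.v *)
From mathcomp Require Import all_boot.
Set Implicit Arguments. Unset Strict Implicit. Unset Printing Implicit Defensive.

Inductive letter := L | S | M.

Definition phi (p : nat) (a : letter) : seq letter :=
  match a with
  | L => rcons (nseq p L) S
  | S => [:: M]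
  | M => rcons (nseq p.-1 L) S
  end.

Definition phiw (p : nat) (w : seq letter) : seq letter := flatten (map (phi p) w).

Definition phin (p n : nat) : seq letter := iter n (phiw p) [:: L].

(* The fixed point u^(p) = lim_n phi_p^n(L), as a function nat -> letter
   (letters indexed from 0). Since phi_p(L) starts with L, each phi_p^n(L)
   is a prefix of phi_p^(n+1)(L), and |phi_p^n(L)| >= n+1 for p >= 1, so the
   i-th letter of the limit is the i-th letter of phi_p^(i+1)(L). *)
Definition u (p : nat) (i : nat) : letter := nth L (phin p i.+1) i.

(* Main.v *)
Require Import Defs.
From mathcomp Require Import all_boot.
From mathcomp Require Import zify.

Definition adj (a b : letter) : bool :=
  match a, b with
  | L, L | L, S | S, L | S, M | M, L => true
  | _, _ => false
  end.

Definition lastphi (a : letter) : letter :=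
  match a with L => S | S => M | M => S end.

Lemma path_block k : path adj L (rcons (nseq k L) S).
Proof. by elim: k => [|k IH] //=. Qed.

Lemma last_phi p a x : last x (phi p a) = lastphi a.
Proof. by case: a => //=; rewrite last_rcons. Qed.

Lemma phi_ok p x y : 1 < p -> adj x y -> path adj (lastphi x) (phi p y).
Proof.
move=> hp; case: p hp => [|[|p]] // _.
by case: x; case: y => //= _; rewrite ?andbT //; apply: path_block.
Qed.

Lemma phiw_cons p y w : phiw p (y :: w) = phi p y ++ phiw p w.
Proof. by []. Qed.

Lemma phiw_cat p w t : phiw p (w ++ t) = phiw p w ++ phiw p t.
Proof. by rewrite /phiw map_cat flatten_cat. Qed.

Lemma path_phiw p w x : 1 < p -> path adj x w -> path adj (lastphi x) (phiw p w).
Proof.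
move=> hp; elim: w x => [|y w IH] x //= /andP[hxy hw].
rewrite phiw_cons cat_path phi_ok //= last_phi.
exact: IH.
Qed.

Lemma phin_cons p n : 0 < p -> exists t, phin p n = L :: t.
Proof.
move=> hp; elim: n => [|n [t IH]]; first by exists [::].
rewrite /phin iterS -/(phin p n) IH phiw_cons.
move: IH; case: p hp => // p _ _ /=; by eexists.
Qed.

Lemma path_phin p n : 1 < p -> path adj M (phin p n).
Proof.
move=> hp; elim: n => [|n IH] //.
have [t ht] := phin_cons p n (ltnW hp).
rewrite /phin iterS -/(phin p n) ht phiw_cons cat_path.
rewrite ht /= in IH.
rewrite (@phi_ok p S L hp) //=.
rewrite last_rcons. exact: (@path_phiw p t L hp IH).
Qed.

Lemma size_phiw p w : 0 < p -> size w <= size (phiw p w).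
Proof.
move=> hp; elim: w => [|y w IH] //=.
rewrite phiw_cons size_cat.
have : 0 < size (phi p y) by case: y => //=; rewrite size_rcons.
move=> h; rewrite -add1n leq_add //.
Qed.

Lemma size_phin p n : 0 < p -> n < size (phin p n).
Proof.
move=> hp; elim: n => [|n IH] //.
have [t ht] := phin_cons p n hp.
rewrite /phin iterS -/(phin p n).
rewrite ht in IH *; rewrite phiw_cons size_cat.
have h1 : size (phi p L) = p.+1 by rewrite /= size_rcons size_nseq.
rewrite h1.
have := size_phiw p t hp.
move: IH => /= IH. lia.
Qed.

Lemma phin_prefix p n : 0 < p -> exists t, phin p n.+1 = phin p n ++ t.
Proof.
move=> hp; elim: n => [|n [t IH]].
  by case: p hp => // p _; exists (rcons (nseq p L) S ++ [::]).
exists (phiw p t).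
by change (phin p n.+2) with (phiw p (phin p n.+1)); rewrite {1}IH phiw_cat.
Qed.

Lemma phin_mono p n k : 0 < p -> exists t, phin p (k + n) = phin p n ++ t.
Proof.
move=> hp; elim: k => [|k [t IH]]; first by exists [::]; rewrite cats0.
have [t' ht'] := phin_prefix p (k + n) hp.
by exists (t ++ t'); rewrite addSn ht' IH catA.
Qed.

Lemma phin_nth p n m i : 0 < p -> n <= m -> i < size (phin p n) ->
  nth L (phin p m) i = nth L (phin p n) i.
Proof.
move=> hp /subnK <- hi.
have [t ->] := phin_mono p n (m - n) hp.
by rewrite nth_cat hi.
Qed.

Lemma u_nth p i N : 0 < p -> i < N -> u p i = nth L (phin p N) i.
Proof.
move=> hp hiN; rewrite /u (@phin_nth p i.+1 N i hp hiN) //.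
exact: ltnW (size_phin p i.+1 hp).
Qed.

Theorem mainTheorem3 (p : nat) (hp : 1 < p) :
  (forall i, u p i = S ->
     0 < i /\ u p i.-1 = L /\ (u p i.+1 = L \/ u p i.+1 = M)) /\
  (forall i, u p i = M ->
     0 < i /\ u p i.-1 = S /\ u p i.+1 = L).
Proof.
have hp0 : 0 < p by apply: ltnW.
have key : forall i, 0 < i /\ adj (u p i.-1) (u p i) /\ adj (u p i) (u p i.+1)
    \/ (i = 0 /\ u p i = L).
  move=> i.
  have hs : i.+2 < size (phin p i.+2) := size_phin p i.+2 hp0.
  have hpath := path_phin p i.+2 hp.
  move/(pathP L): hpath => hP.
  rewrite (@u_nth p i.+1 i.+2 hp0 (ltnSn _)) (@u_nth p i i.+2 hp0 (ltnW (ltnSn _))).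
  case: i hs hP => [|k] hs hP.
    right; split => //.
    have := hP 0 (ltnW (ltnW hs)); rewrite /=.
    by case: (nth L _ 0).
  left; split => //.
  rewrite (@u_nth p k k.+3 hp0 (ltnW (ltnW (ltnSn _)))) /=.
  split.
    by have := hP k.+1 (ltnW (ltnW hs)).
  by have := hP k.+2 (ltnW hs).
split=> i hi; (have [[h0 [h1 h2]]|[_ h]] := key i; last by rewrite hi in h);
  rewrite hi in h1 h2; split => //;
  move: h1 h2; case: (u p i.-1); case: (u p i.+1) => //=; auto.
Qed.
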